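(* Let $\mu>0$ and suppose Assumptions A and B below hold. For any given $(\bar{\mathbf{x}},\bar y)\in\mathrm{dom}\,g\times\mathrm{dom}\,h$ and $\eta_y>0$, with $\bar y^+=\mathrm{prox}_{\eta_yh}(\bar y+\eta_ys_y(\bar{\mathbf{x}},\bar y;\boldsymbol\zeta))$, $$2\eta_y\langle\tilde G_y(\bar{\mathbf{x}},\bar y;\boldsymbol\zeta),\bar y-y_*(\bar{\mathbf{x}})\rangle+\eta_y^2\|\tilde G_y(\bar{\mathbf{x}},\bar y;\boldsymbol\zeta)\|^2\le-\eta_y\mu\|\bar y-y_*(\bar{\mathbf{x}})\|^2-\eta_y^2(1-L\eta_y)\|\tilde G_y(\bar{\mathbf{x}},\bar y;\boldsymbol\zeta)\|^2+2\eta_y\langle s_y(\bar{\mathbf{x}},\bar y;\boldsymbol\zeta)-\nabla_yf(\bar{\mathbf{x}},\bar y),\bar y^+-y_*(\bar{\mathbf{x}})\rangle.$$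
   Context: Setting. $\mathcal{X}_i=\mathbb{R}^{n_i}$, $\mathcal{X}=\prod_{i=1}^N\mathcal{X}_i$, $\mathcal{Y}$ finite-dimensional Euclidean; $g(\mathbf{x})=\sum_ig_i(x_i)$; $\mathrm{prox}_\phi(u)=\arg\min_v\phi(v)+\frac12\|v-u\|^2$. Assumption A: $g_i$, $h$ closed convex; $f$ differentiable on an open set containing $\mathrm{dom}\,g\times\mathrm{dom}\,h$, $\nabla f$ $L$-Lipschitz there, $f(\mathbf{x},\cdot)$ $\mu$-strongly concave for each $\mathbf{x}\in\mathrm{dom}\,g$. $y_*(\mathbf{x})=\arg\max_yf(\mathbf{x},y)-h(y)$. Assumption B: unbiased stochastic oracle $\tilde\nabla_yf(\mathbf{x},y;\zeta)$ for $\nabla_yf$ with variance at most $\sigma_y^2$ at every point of $\mathrm{dom}\,g\times\mathrm{dom}\,h$. $\boldsymbol\zeta=[\zeta_j]_{j=1}^{M_y}$ i.i.d. samples, $s_y(\mathbf{x},y;\boldsymbol\zeta)=\frac1{M_y}\sum_j\tilde\nabla_yf(\mathbf{x},y;\zeta_j)$, $\tilde G_y(\mathbf{x},y;\boldsymbol\zeta)=[\mathrm{prox}_{\eta_yh}(y+\eta_ys_y)-y]/\eta_y$. *)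

(* Defs.v *)
From HB Require Import structures.
From mathcomp Require Import all_boot all_order all_algebra.
From mathcomp Require Import all_classical all_reals all_analysis.
Set Implicit Arguments. Unset Strict Implicit. Unset Printing Implicit Defensive.
Import Order.TTheory GRing.Theory Num.Theory.
Import numFieldNormedType.Exports.
Local Open Scope classical_set_scope.
Local Open Scope ring_scope.

Section Euclid.
Variable R : realType.

Definition dotv (m : nat) (u v : 'rV[R]_m) : R := \sum_(i < m) u 0 i * v 0 i.
Definition sqn (m : nat) (u : 'rV[R]_m) : R := dotv u u.
Definition enorm (m : nat) (u : 'rV[R]_m) : R := Num.sqrt (sqn u).

Definition pnorm (n m : nat) (u : 'rV[R]_n) (v : 'rV[R]_m) : R :=
  Num.sqrt (sqn u + sqn v).

Definition edom (T : Type) (phi : T -> \bar R) : set T :=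
  [set x | (phi x < +oo)%E].

Definition proper_fun (T : Type) (phi : T -> \bar R) : Prop :=
  (forall x, phi x != -oo%E) /\ exists x, (phi x < +oo)%E.

Definition convex_fun (m : nat) (phi : 'rV[R]_m -> \bar R) : Prop :=
  forall (u v : 'rV[R]_m) (a : R), 0 <= a <= 1 ->
    (phi (a *: u + (1 - a) *: v)%R <= a%:E * phi u + (1 - a)%:E * phi v)%E.

Definition closed_fun (m : nat) (phi : 'rV[R]_m -> \bar R) : Prop :=
  forall t : R, closed [set u | (phi u <= t%:E)%E].

Definition closed_proper_convex (m : nat) (phi : 'rV[R]_m -> \bar R) : Prop :=
  [/\ closed_fun phi, proper_fun phi & convex_fun phi].

Definition strongly_concave (m : nat) (mu : R) (psi : 'rV[R]_m -> R) : Prop :=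
  forall (u v : 'rV[R]_m) (a : R), 0 <= a <= 1 ->
    a * psi u + (1 - a) * psi v + mu / 2 * a * (1 - a) * sqn (u - v)
      <= psi (a *: u + (1 - a) *: v).

Definition is_prox (m : nat) (phi : 'rV[R]_m -> \bar R) (u v : 'rV[R]_m) : Prop :=
  forall w, (phi v + (sqn (v - u)%R / 2)%:E <= phi w + (sqn (w - u)%R / 2)%:E)%E.

(* separable function g(x) = sum_i g_i(x_i), x = [x_1 .. x_N], x_i in R^{n_i} *)
Definition sepsum (N : nat) (n : 'I_N -> nat)
  (gi : forall i : 'I_N, 'rV[R]_(n i) -> \bar R)
  (x : 'rV[R]_(\sum_(i < N) n i)) : \bar R :=
  (\sum_(i < N) gi i (submxrow x i))%E.

End Euclid.

(* Main.v *)
Require Import Defs.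
From HB Require Import structures.
From mathcomp Require Import all_boot all_order all_algebra.
From mathcomp Require Import all_classical all_reals all_analysis.
Import Order.TTheory GRing.Theory Num.Theory.
Import numFieldNormedType.Exports.
Local Open Scope classical_set_scope.
Local Open Scope ring_scope.

From mathcomp Require Import ring lra.
Set Implicit Arguments. Unset Strict Implicit. Unset Printing Implicit Defensive.
Section Dots.
Variable R : realType.
Variable m : nat.
Implicit Types u v w : 'rV[R]_m.

Lemma dotvC u v : dotv u v = dotv v u.
Proof. by apply: eq_bigr => i _; rewrite mulrC. Qed.
Lemma dotvDl u v w : dotv (u + v) w = dotv u w + dotv v w.
Proof. by rewrite /dotv -big_split; apply: eq_bigr => i _; rewrite !mxE mulrDl. Qed.
Lemma dotvZl (a : R) u w : dotv (a *: u) w = a * dotv u w.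
Proof. by rewrite /dotv mulr_sumr; apply: eq_bigr => i _; rewrite !mxE mulrA. Qed.
Lemma dotvNl u w : dotv (- u) w = - dotv u w.
Proof. by rewrite -scaleN1r dotvZl mulN1r. Qed.
Lemma dotvBl u v w : dotv (u - v) w = dotv u w - dotv v w.
Proof. by rewrite dotvDl dotvNl. Qed.
Lemma dotvDr u v w : dotv w (u + v) = dotv w u + dotv w v.
Proof. by rewrite dotvC dotvDl !(dotvC w). Qed.
Lemma dotvZr (a : R) u w : dotv w (a *: u) = a * dotv w u.
Proof. by rewrite dotvC dotvZl dotvC. Qed.
Lemma dotvNr u w : dotv w (- u) = - dotv w u.
Proof. by rewrite dotvC dotvNl dotvC. Qed.
Lemma dotvBr u v w : dotv w (u - v) = dotv w u - dotv w v.
Proof. by rewrite dotvDr dotvNr. Qed.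
Lemma dotv0l w : dotv 0 w = 0.
Proof. by rewrite -(scale0r 0) dotvZl mul0r. Qed.
Lemma sqn_ge0 u : 0 <= sqn u.
Proof. by apply: sumr_ge0 => i _; rewrite -expr2 sqr_ge0. Qed.
Lemma sqn_eq0 u : sqn u = 0 -> u = 0.
Proof.
move=> h; apply/matrixP => i j; rewrite [i]ord1 mxE.
have /eqP := h; rewrite /sqn /dotv psumr_eq0; last by move=> k _; rewrite -expr2 sqr_ge0.
by move/allP/(_ j (mem_index_enum _)); rewrite /= mulf_eq0 orbb => /eqP.
Qed.

Definition dotE := (dotvDl, dotvDr, dotvZl, dotvZr, dotvNl, dotvNr, dotvBl, dotvBr).

Lemma cs u v : `|dotv u v| <= Num.sqrt (sqn u) * Num.sqrt (sqn v).
Proof.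
set p := Num.sqrt (sqn u); set q := Num.sqrt (sqn v).
have hp : 0 <= p by exact: sqrtr_ge0.
have hq : 0 <= q by exact: sqrtr_ge0.
have pp : p ^+ 2 = sqn u by rewrite sqr_sqrtr // sqn_ge0.
have qq : q ^+ 2 = sqn v by rewrite sqr_sqrtr // sqn_ge0.
have [p0|pn0] := eqVneq p 0.
  have : sqn u = 0 by rewrite -pp p0 expr0n.
  by move/sqn_eq0 => ->; rewrite dotv0l normr0 mulr_ge0.
have [q0|qn0] := eqVneq q 0.
  have : sqn v = 0 by rewrite -qq q0 expr0n.
  by move/sqn_eq0 => ->; rewrite dotvC dotv0l normr0 mulr_ge0.
have pg : 0 < p by rewrite lt_def pn0.
have qg : 0 < q by rewrite lt_def qn0.
have h1 := sqn_ge0 (q *: u - p *: v).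
have h2 := sqn_ge0 (q *: u + p *: v).
rewrite /sqn !dotE -/(sqn u) -/(sqn v) -pp -qq (dotvC v u) in h1 h2.
have hpq : 0 < p * q by rewrite mulr_gt0.
rewrite ler_norml; apply/andP; split.
  rewrite -(ler_pM2l hpq); nra.
rewrite -(ler_pM2l hpq); nra.
Qed.
End Dots.
Section Desc.
Variable R : realType.
Variable m : nat.
Variables (phi : 'rV[R]_m -> R) (gphi : 'rV[R]_m -> 'rV[R]_m) (S : set 'rV[R]_m) (L : R).
Hypothesis Sconv : forall u v (a : R), S u -> S v -> 0 <= a <= 1 -> S (a *: u + (1 - a) *: v).
Hypothesis Hder : forall y (D : 'rV[R]_m) (t : R), S (t *: D + y) ->
  is_derive t 1 (fun t => phi (t *: D + y)) (dotv (gphi (t *: D + y)) D).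
Hypothesis HL : forall u w (D : 'rV[R]_m), S u -> S w ->
  `|dotv (gphi u - gphi w) D| <= L * Num.sqrt (sqn (u - w)) * Num.sqrt (sqn D).

Lemma seg_in y1 y2 (t : R) : S y1 -> S y2 -> 0 <= t <= 1 -> S (t *: (y2 - y1) + y1).
Proof.
move=> s1 s2 ht; have := Sconv s2 s1 ht.
by rewrite scalerBr scalerBl scale1r addrA [_ - t *: y1 + y1]addrAC.
Qed.

Lemma lip_seg y1 y2 (t : R) : S y1 -> S y2 -> 0 <= t <= 1 ->
  `|dotv (gphi (t *: (y2 - y1) + y1) - gphi y1) (y2 - y1)| <= L * t * sqn (y2 - y1).
Proof.
move=> s1 s2 /andP[t0 t1].
have := HL (y2 - y1) (seg_in s1 s2 (t:=t) _) s1; rewrite ?t0 ?t1 => /(_ isT).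
rewrite addrK /sqn dotvZl dotvZr mulrA -expr2 -/(sqn _) sqrtrM ?sqr_ge0 // sqrtr_sqr.
rewrite (ger0_norm t0).
have := sqn_ge0 (y2 - y1); set D := sqn _ => hD.
have ss : Num.sqrt D * Num.sqrt D = D by rewrite -expr2 sqr_sqrtr.
move=> H; apply: (le_trans H); rewrite -{3}ss; rewrite le_eqVlt; apply/orP; left; apply/eqP; ring.
Qed.
Lemma descent y1 y2 : S y1 -> S y2 ->
  phi y1 + dotv (gphi y1) (y2 - y1) - L / 2 * sqn (y2 - y1) <= phi y2.
Proof.
move=> s1 s2.
set D := y2 - y1; set K := dotv (gphi y1) D; set c := L / 2 * sqn D.
pose q := fun t : R => phi (t *: D + y1).
pose psi : R -> R := q - (K \*: (@id R)) + (c \*: ((@id R) \* (@id R))).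
have dpsi (t : R) : 0 <= t <= 1 -> is_derive t 1 psi (dotv (gphi (t *: D + y1)) D - K + c * (t + t)).
  move=> ht; apply: is_derive_eq.
  have hq := Hder (seg_in s1 s2 ht).
  apply: is_deriveD.
  have e1 (x : R) : x%:A = x by exact: mulr1.
  by rewrite /= !e1.
have hcont : {within `[0, 1], continuous psi}.
  apply: derivable_within_continuous => x hx.
  by have [] := dpsi x hx.
have [c0 c0in hmvt] := @MVT_segment R psi
  (fun t => dotv (gphi (t *: D + y1)) D - K + c * (t + t)) 0 1 ler01
  (fun x hx => dpsi x (subset_itv_oo_cc hx)) hcont.
have c0b : 0 <= c0 <= 1 by [].
have hl := lip_seg s1 s2 c0b.
rewrite dotvBl -/D -/K ler_norml in hl.
have {hl} /andP[hl _] := hl.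
have psiE t : psi t = phi (t *: D + y1) - K * t + c * (t * t) by [].
rewrite !psiE scale1r scale0r add0r subrK !mul0r !mulr0 subr0 addr0 mulr1 in hmvt.
have : 0 <= phi y2 - K + c * (1 * 1) - phi y1.
  rewrite hmvt; move: c0b hl; rewrite /c; move=> /andP[h0 h1] hl; nra.
rewrite mulr1; lra.
Qed.
Lemma eps_le0 (X C : R) : (forall a : R, 0 < a <= 1 -> X <= a * C) -> X <= 0.
Proof.
move=> H; have h1 := H 1; rewrite ltr01 lexx mul1r in h1; have {}h1 := h1 isT.
rewrite leNgt; apply/negP => X0.
have C0 : 0 < C by apply: lt_le_trans h1.
have ha : 0 < X / (2 * C) <= 1.
  apply/andP; split; first by rewrite divr_gt0 // mulr_gt0.
  by rewrite ler_pdivrMr ?mulr_gt0 // mul1r; lra.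
have := H _ ha.
have -> : X / (2 * C) * C = X / 2 by field; rewrite gt_eqF.
lra.
Qed.

Lemma strconc (mu : R) y1 y2 : strongly_concave mu phi -> S y1 -> S y2 ->
  phi y2 <= phi y1 + dotv (gphi y1) (y2 - y1) - mu / 2 * sqn (y2 - y1).
Proof.
move=> hsc s1 s2.
set D := y2 - y1; set K := dotv (gphi y1) D.
have hD : 0 <= sqn D by exact: sqn_ge0.
suff : phi y2 - phi y1 + mu / 2 * sqn D - K <= 0 by lra.
apply: (@eps_le0 _ (mu / 2 * sqn D + `|L| * sqn D)) => a /andP[a0 a1].
have ha : 0 <= a <= 1 by rewrite ltW.
have := hsc y2 y1 a ha.
have -> : a *: y2 + (1 - a) *: y1 = a *: D + y1.
  by rewrite /D scalerBr scalerBl scale1r -addrA [- _ + _]addrC.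
move=> hs.
pose q := fun t : R => phi (t *: D + y1).
have dq (t : R) : 0 <= t <= a -> is_derive t 1 q (dotv (gphi (t *: D + y1)) D).
  move=> /andP[t0 t1]; apply: Hder; apply: seg_in => //.
  by rewrite t0 (le_trans t1).
have hcont : {within `[0, a], continuous q}.
  apply: derivable_within_continuous => x hx.
  by have [] := dq x hx.
have [c0 c0in hmvt] := @MVT_segment R q
  (fun t => dotv (gphi (t *: D + y1)) D) 0 a (ltW a0)
  (fun x hx => dq x (subset_itv_oo_cc hx)) hcont.
have c0b : 0 <= c0 <= 1.
  by move: c0in; rewrite in_itv /= => /andP[-> h]; rewrite (le_trans h).
have hl := lip_seg s1 s2 c0b.
rewrite dotvBl -/D -/K ler_norml in hl.
have {hl} /andP[_ hl] := hl.
rewrite /q scale0r add0r subr0 in hmvt.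
have hL : L * c0 * sqn D <= `|L| * a * sqn D.
  apply: ler_wpM2r => //; apply: (le_trans (y := `|L| * c0)).
    by apply: ler_wpM2r; [move: c0b => /andP[] | exact: ler_norm].
  by apply: ler_wpM2l => //; move: c0in; rewrite in_itv /= => /andP[].
have hb : phi (a *: D + y1) - phi y1 <= a * (K + `|L| * a * sqn D).
  rewrite hmvt mulrC; apply: ler_wpM2l; [exact: ltW | lra].
rewrite -(ler_pM2l a0).
have hL0 : 0 <= `|L| by [].
nra.
Qed.
End Desc.
Lemma seg_is_derive (R : realType) (V : normedModType R) (F : V -> R) (z v : V) (t0 : R) :
  differentiable F (t0 *: v + z) ->
  is_derive t0 1 (fun t : R => F (t *: v + z)) ('d F (t0 *: v + z) v).
Proof.
move=> dF.
have e : (fun h : R => h^-1 *: ((fun t : R => F (t *: v + z)) (h *: 1 + t0) - (fun t => F (t*:v+z)) t0)) = (fun h => h^-1 *: (F (h *: v + (t0 *: v + z)) - F (t0 *: v + z))).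
  apply/funext => h /=. by rewrite [h *: 1]mulr1 scalerDl addrA.
apply: DeriveDef.
  by rewrite /derivable e; exact: diff_derivable.
by rewrite /derive e; exact: deriveE.
Qed.

Theorem corollary1 (R : realType)
  (* spaces: X = prod_i R^{n_i}, stored as R^(sum_i n_i); Y = R^m *)
  (N : nat) (n : 'I_N -> nat) (m : nat)
  (gi : forall i : 'I_N, 'rV[R]_(n i) -> \bar R)
  (h : 'rV[R]_m -> \bar R)
  (f : 'rV[R]_(\sum_(i < N) n i) -> 'rV[R]_m -> R)
  (gx : 'rV[R]_(\sum_(i < N) n i) -> 'rV[R]_m -> 'rV[R]_(\sum_(i < N) n i))
  (gy : 'rV[R]_(\sum_(i < N) n i) -> 'rV[R]_m -> 'rV[R]_m)
  (U : set ('rV[R]_(\sum_(i < N) n i) * 'rV[R]_m))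
  (L mu : R)
  (* Assumption A *)
  (Hmu : 0 < mu)
  (Hgi : forall i, closed_proper_convex (gi i))
  (Hh : closed_proper_convex h)
  (HUopen : open U)
  (HU : edom (sepsum gi) `*` edom h `<=` U)
  (Hdiff : forall z, U z ->
     differentiable (fun w : 'rV[R]_(\sum_(i < N) n i) * 'rV[R]_m => f w.1 w.2) z /\
     forall dz : 'rV[R]_(\sum_(i < N) n i) * 'rV[R]_m,
       'd (fun w : 'rV[R]_(\sum_(i < N) n i) * 'rV[R]_m => f w.1 w.2) z dz
         = dotv (gx z.1 z.2) dz.1 + dotv (gy z.1 z.2) dz.2)
  (HLip : forall z z', U z -> U z' ->
     pnorm (gx z.1 z.2 - gx z'.1 z'.2) (gy z.1 z.2 - gy z'.1 z'.2)
       <= L * pnorm (z.1 - z'.1) (z.2 - z'.2))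
  (Hconc : forall x, edom (sepsum gi) x -> strongly_concave mu (f x))
  (* Assumption B: stochastic oracle for grad_y f with variance <= sigy^2 *)
  (d : measure_display) (Z : measurableType d) (P : probability Z R)
  (orc : 'rV[R]_(\sum_(i < N) n i) -> 'rV[R]_m -> Z -> 'rV[R]_m)
  (sigy : R)
  (Hunb : forall x y, edom (sepsum gi) x -> edom h y -> forall j : 'I_m,
     P.-integrable setT (fun z => (orc x y z 0 j)%:E) /\
     (\int[P]_z (orc x y z 0 j)%:E = (gy x y 0 j)%:E)%E)
  (Hvar : forall x y, edom (sepsum gi) x -> edom h y ->
     (\int[P]_z (sqn (orc x y z - gy x y))%:E <= (sigy ^+ 2)%:E)%E)
  (* samples, points, step size *)
  (My : nat) (HMy : (0 < My)%N) (zeta : 'I_My -> Z)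
  (xbar : 'rV[R]_(\sum_(i < N) n i)) (ybar : 'rV[R]_m)
  (Hxbar : edom (sepsum gi) xbar) (Hybar : edom h ybar)
  (etay : R) (Heta : 0 < etay)
  (* y_*(xbar) = argmax_y f(xbar, y) - h(y) *)
  (ystar : 'rV[R]_m)
  (Hystar : forall y, ((f xbar y)%:E - h y <= (f xbar ystar)%:E - h ystar)%E)
  (* ybar^+ = prox_{etay h}(ybar + etay s_y) *)
  (yplus : 'rV[R]_m) :
  let s := (My%:R)^-1 *: \sum_(j < My) orc xbar ybar (zeta j) in
  is_prox (fun y => (etay%:E * h y)%E) (ybar + etay *: s) yplus ->
  let G := etay^-1 *: (yplus - ybar) in
  2 * etay * dotv G (ybar - ystar) + etay ^+ 2 * sqn G
    <= - (etay * mu * sqn (ybar - ystar))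
       - etay ^+ 2 * (1 - L * etay) * sqn G
       + 2 * etay * dotv (s - gy xbar ybar) (yplus - ystar).
Proof.
move=> s hprox; cbv zeta; set G := etay^-1 *: (yplus - ybar).
case: Hh => _ [hNy _] hconv.
have hfin x : (h x < +oo)%E -> h x = (fine (h x))%:E.
  by move: (hNy x); case: (h x).
have Sconv : forall (u v : 'rV[R]_m) (a : R), edom h u -> edom h v -> 0 <= a <= 1 ->
    edom h (a *: u + (1 - a) *: v).
  move=> u v a su sv ha; rewrite /edom /=.
  have := hconv u v a ha; rewrite (hfin u su) (hfin v sv) -!EFinM -EFinD => hle.
  exact: le_lt_trans hle (ltry _).
have Hder : forall (y D : 'rV[R]_m) (t : R), edom h (t *: D + y) ->
    is_derive t 1 (fun t => f xbar (t *: D + y)) (dotv (gy xbar (t *: D + y)) D).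
  move=> y D t st.
  have Uz : U (xbar, t *: D + y) by apply: HU; split.
  have [dF dFE] := Hdiff _ Uz.
  have e0 (t0 : R) : t0 *: ((0 : 'rV[R]_(\sum_(i < N) n i)), D) + (xbar, y) = (xbar, t0 *: D + y).
    by apply: injective_projections => /=; rewrite ?scaler0 ?add0r.
  have -> : (fun t0 : R => f xbar (t0 *: D + y)) = (fun t0 : R =>
     (fun w : 'rV[R]_(\sum_(i < N) n i) * 'rV[R]_m => f w.1 w.2) (t0 *: ((0 : 'rV[R]_(\sum_(i < N) n i)), D) + (xbar, y))).
    by apply/funext => t0; rewrite e0.
  have hd := @seg_is_derive R _ (fun w : 'rV[R]_(\sum_(i < N) n i) * 'rV[R]_m => f w.1 w.2) (xbar, y) (0, D) t.
  rewrite e0 in hd; have {}hd := hd dF.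
  apply: is_derive_eq hd _.
  by rewrite dFE /= dotvC dotv0l add0r.
have HL : forall u w D : 'rV[R]_m, edom h u -> edom h w ->
    `|dotv (gy xbar u - gy xbar w) D| <= L * Num.sqrt (sqn (u - w)) * Num.sqrt (sqn D).
  move=> u w D su sw.
  have := HLip (xbar, u) (xbar, w) (HU (xbar, u) (conj Hxbar su)) (HU (xbar, w) (conj Hxbar sw)).
  rewrite /= /pnorm subrr [sqn 0]/sqn dotv0l add0r => hl.
  apply: le_trans (cs _ _) _.
  apply: ler_wpM2r; first exact: sqrtr_ge0.
  apply: le_trans hl.
  by rewrite ler_sqrt ?addr_ge0 ?sqn_ge0 // lerDr sqn_ge0.
have Hb := hfin _ Hybar.
have Hys : (h ystar < +oo)%E.
  have := Hystar ybar; rewrite Hb.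
  case E: (h ystar) => [r| |] //; first by rewrite ltry.
have Hyp : (h yplus < +oo)%E.
  have := hprox ybar; rewrite Hb.
  case E: (h yplus) => [r| |] //; first by rewrite ltry.
    by rewrite gt0_muley ?lte_fin // addye.
have Hs := hfin _ Hys; have Hp := hfin _ Hyp.
set Hbr := fine (h ybar) in Hb; set Hsr := fine (h ystar) in Hs; set Hpr := fine (h yplus) in Hp.
have hdesc := descent Sconv Hder HL Hybar Hyp.
have hsc := strconc Sconv Hder HL (Hconc xbar Hxbar) Hybar Hys.
have hopt : f xbar yplus - Hpr <= f xbar ystar - Hsr.
  by have := Hystar yplus; rewrite Hp Hs -!EFinB lee_fin.
set u := ybar + etay *: s in hprox.
have hpx : etay * (Hpr - Hsr) <= dotv (yplus - u) (ystar - yplus).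
  set A := yplus - u; set B := ystar - yplus.
  suff : etay * (Hpr - Hsr) - dotv A B <= 0 by lra.
  apply: (@eps_le0 _ _ (sqn B / 2)) => t /andP[t0 t1].
  have ht : 0 <= t <= 1 by rewrite ltW.
  set w := t *: ystar + (1 - t) *: yplus.
  have hw := hconv ystar yplus t ht.
  rewrite Hs Hp -!EFinM -EFinD -/w in hw.
  have sw : edom h w := le_lt_trans hw (ltry _).
  have Hw := hfin _ sw.
  have := hprox w; rewrite /= Hp Hw -!EFinM -!EFinD lee_fin => hpw.
  rewrite Hw lee_fin in hw.
  have ew : w - u = A + t *: B.
    by apply/matrixP => i j; rewrite !mxE; ring.
  have hpw2 : etay * Hpr + sqn A / 2 <= etay * fine (h w) + sqn (A + t *: B) / 2.
    by rewrite -ew; exact: hpw.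
  clearbody A B; clear hpw.
  rewrite /sqn !dotE -/(sqn A) -/(sqn B) (dotvC B A) in hpw2.
  have hw' := ler_wpM2l (ltW Heta) hw.
  rewrite -(ler_pM2l t0).
  nra.
have eyp : yplus = etay *: G + ybar.
  by rewrite /G scalerA mulfV ?gt_eqF // scale1r subrK.
have hsum : 0 <= (f xbar yplus - (f xbar ybar + dotv (gy xbar ybar) (yplus - ybar) - L / 2 * sqn (yplus - ybar)))
   + (f xbar ybar + dotv (gy xbar ybar) (ystar - ybar) - mu / 2 * sqn (ystar - ybar) - f xbar ystar)
   + (f xbar ystar - Hsr - (f xbar yplus - Hpr)) by lra.
have hsum2 := mulr_ge0 (ltW Heta) hsum.
rewrite /u in hpx.
clearbody G s u.
rewrite eyp in hsum2 hpx *.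
set g := gy xbar ybar in hsum2 *.
rewrite /sqn !dotE in hsum2 hpx *.
have c1 := dotvC G s. have c2 := dotvC G g. have c3 := dotvC G ybar. have c4 := dotvC G ystar.
have c5 := dotvC s g. have c6 := dotvC s ybar. have c7 := dotvC s ystar.
have c8 := dotvC g ybar. have c9 := dotvC g ystar. have c10 := dotvC ybar ystar.
lra.
Qed.
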